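(* Let $N\ge2$ and let $\phi:\mathbb{R}_{\ge0}\to\mathbb{R}$ be continuous. Then the DKPP $P_\phi(\cdot;\bm{L})$ is log-modular for every $N\times N$ positive semidefinite Hermitian matrix $\bm{L}$ if and only if $\phi$ is affine, i.e. $\phi(x)=bx+c$ for some $b,c\in\mathbb{R}$. (In particular, if $\phi$ is affine then $P_\phi(\cdot;\bm{L})$ is log-modular for every such $\bm{L}$.)
   Context: Let $\mathcal{Y}=\{1,\dots,N\}$. For $\mathcal{A}\subseteq\mathcal{Y}$, $\bm{L}[\mathcal{A}]=(L_{ij})_{i,j\in\mathcal{A}}$ denotes the principal submatrix. For a function $\phi$ and a Hermitian matrix $\bm{X}=\bm{U}\mathrm{diag}(\mu_1,\dots,\mu_k)\bm{U}^*$, $\phi(\bm{X})=\bm{U}\mathrm{diag}(\phi(\mu_1),\dots,\phi(\mu_k))\bm{U}^*$. Given a continuous $\phi:\mathbb{R}_{\ge0}\to\mathbb{R}$ and an $N\times N$ positive semidefinite Hermitian $\bm{L}$, the DKPP is $P_\phi(\mathcal{A};\bm{L})=\exp(\operatorname{tr}\phi(\bm{L}[\mathcal{A}]))/Z_\phi(\bm{L})$ with $Z_\phi(\bm{L})=\sum_{\mathcal{B}\subseteq\mathcal{Y}}\exp(\operatorname{tr}\phi(\bm{L}[\mathcal{B}]))$ and $\operatorname{tr}\phi$ of the empty matrix equal to $0$. A set function $f:2^{\mathcal{Y}}\to\mathbb{R}$ is modular if $f(\mathcal{S})+f(\mathcal{T})=f(\mathcal{S}\cup\mathcal{T})+f(\mathcal{S}\cap\mathcal{T})$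 for all $\mathcal{S},\mathcal{T}\subseteq\mathcal{Y}$; a positive function $P$ is log-modular if $\log P$ is modular. *)

(* Defs.v *)
From HB Require Import structures.
From mathcomp Require Import all_boot all_order all_algebra.
From mathcomp Require Import complex spectral.
From mathcomp Require Import all_classical all_reals all_analysis.

Set Implicit Arguments.
Unset Strict Implicit.
Unset Printing Implicit Defensive.

Import Order.TTheory GRing.Theory Num.Theory.
Local Open Scope ring_scope.
Local Open Scope complex_scope.
Local Open Scope sesquilinear_scope.

Section DKPP.
Variable R : realType.
Local Notation C := R[i].

(* Hermitian matrices: the library's  L \is hermsymmx  (L == L^T conjugated). *)

(* Positive semidefinite: v L v^* is a nonnegative real for every (row) vector v. *)
Definition psdmx k (L : 'M[C]_k) : Prop :=
  forall v : 'rV[C]_k, 0 <= (v *m L *m v ^t*) 0 0.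

Definition spectral_decomp k (X U : 'M[C]_k) (mu : 'rV[R]_k) : Prop :=
  U \is unitarymx /\ X = U *m diag_mx (map_mx (fun x => x%:C) mu) *m U ^t*.

(* phi(X) = U diag(phi(mu_1),...,phi(mu_k)) U^* for a chosen spectral decomposition
   (well defined for Hermitian X; 0 if X has no such decomposition). *)
Definition matfun k (phi : R -> R) (X : 'M[C]_k) : 'M[C]_k :=
  match pselect (exists p : 'M[C]_k * 'rV[R]_k, spectral_decomp X p.1 p.2) with
  | left e => let p := projT1 (cid e) in
              p.1 *m diag_mx (map_mx (fun x => (phi x)%:C) p.2) *m p.1 ^t*
  | right _ => 0
  end.

(* tr phi(X); it is real for Hermitian X, we take the real part to land in R.
   For the empty (0 x 0) matrix this is 0. *)
Definition trphi k (phi : R -> R) (X : 'M[C]_k) : R := complex.Re (\tr (matfun phi X)).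

Definition principal_submx N (L : 'M[C]_N) (A : {set 'I_N}) : 'M[C]_#|A| :=
  \matrix_(i, j) L (enum_val i) (enum_val j).

Definition dkpp_Z N (phi : R -> R) (L : 'M[C]_N) : R :=
  \sum_(B : {set 'I_N}) expR (trphi phi (principal_submx L B)).

Definition dkpp N (phi : R -> R) (L : 'M[C]_N) (A : {set 'I_N}) : R :=
  expR (trphi phi (principal_submx L A)) / dkpp_Z phi L.

End DKPP.

Definition modular (T : finType) (R : realType) (f : {set T} -> R) : Prop :=
  forall S T' : {set T}, f S + f T' = f (S :|: T') + f (S :&: T').

Definition log_modular (T : finType) (R : realType) (P : {set T} -> R) : Prop :=
  (forall A, 0 < P A) /\ modular (fun A => ln (P A)).
Arguments psdmx {R k} L.
Arguments matfun {R k} phi X.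
Arguments trphi {R k} phi X.
Arguments principal_submx {R N} L A.
Arguments dkpp_Z {R N} phi L.
Arguments dkpp {R N} phi L A.

(* Main.v *)
Require Import Defs.
From HB Require Import structures.
From mathcomp Require Import all_boot all_order all_algebra.
From mathcomp Require Import complex spectral.
From mathcomp Require Import all_classical all_reals all_analysis.
From mathcomp Require Import ring lra.
Import Order.TTheory GRing.Theory Num.Theory.
Import numFieldNormedType.Exports.
Local Open Scope classical_set_scope.
Local Open Scope ring_scope.

Lemma epsd (R : realType) (phi : R -> R)
  (hphi : {within [set x : R | 0 <= x], continuous phi}) x (hx : 0 <= x) eps (he : 0 < eps) :
  exists2 d, 0 < d & forall y, 0 <= y -> `|x - y| < d -> `|phi x - phi y| < eps.
Proof.
have := (proj1 (subspace_continuousP _ _) hphi x hx).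
move/cvgrPdist_lt => /(_ eps he).
rewrite near_withinE /= => /nbhs_ballP [d d0 Hd].
exists d => // y y0 xy; apply: Hd => //.
Qed.

Lemma pow2_big (R : realType) (eta : R) : 0 < eta -> exists m : nat, 1 / 2 ^+ m < eta.
Proof.
move=> he.
pose n := Num.trunc (1 / eta).
have h1 : 1 / eta < n.+1%:R := truncnS_gt _.
have h2 : (n.+1 < 2 ^ n.+1)%N by apply: ltn_expl.
exists n.+1.
have hp : 0 < 2 ^+ n.+1 :> R by apply: exprn_gt0.
rewrite ltr_pdivrMr // -ltr_pdivrMl // mulr1.
rewrite -[eta^-1]mul1r; apply: (lt_trans h1); by rewrite -natrX ltr_nat.
Qed.

Lemma jensen_affine (R : realType) (phi : R -> R)
  (hphi : {within [set x : R | 0 <= x], continuous phi})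
  (J : forall t s, 0 <= s -> s <= t -> phi (t + s) + phi (t - s) = 2 * phi t) :
  exists b c : R, forall x : R, 0 <= x -> phi x = b * x + c.
Proof.
pose b := phi 1 - phi 0; pose c := phi 0.
exists b, c.
pose g x := phi x - (b * x + c).
have Jg t s : 0 <= s -> s <= t -> g (t + s) + g (t - s) = 2 * g t.
  move=> hs hst; rewrite /g -[phi (t+s)](addrK (phi (t-s))) (J t s hs hst); ring.
have g0 : g 0 = 0 by rewrite /g /c; ring.
have g1 : g 1 = 0 by rewrite /g /b /c; ring.
have gn n : g n%:R = 0 /\ g n.+1%:R = 0.
  elim: n => [|n [IH1 IH2]]; first by rewrite g0 g1.
  split => //.
  have := Jg n.+1%:R 1 ler01.
  rewrite -natr1 addrK !natr1 IH1 IH2 mulr0 addr0; apply; by rewrite ler1n.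
have ghalf x : 0 <= x -> g (x / 2) = g x / 2.
  move=> hx; have h2x : 0 <= x/2 by rewrite divr_ge0.
  have := Jg (x/2) (x/2) h2x (lexx _).
  rewrite subrr g0 addr0 -splitr => ->; by field.
have gdy m n : g (n%:R / 2 ^+ m) = 0.
  elim: m n => [|m IH] n; first by rewrite expr0 divr1; case: (gn n).
  have h2 : (2 ^+ m : R) != 0 by rewrite expf_neq0.
  have -> : n%:R / 2 ^+ m.+1 = (n%:R / 2 ^+ m) / 2 :> R by rewrite exprS; field.
  by rewrite ghalf ?IH ?mul0r // divr_ge0 // exprn_ge0.
move=> x hx.
suff : g x = 0 by rewrite /g => /eqP; rewrite subr_eq0 => /eqP.
have key e : 0 < e -> `|g x| < e.
  move=> he.
  have he2 : 0 < e / 2 by rewrite divr_gt0.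
  have [d d0 Hd] := @epsd _ _ hphi x hx _ he2.
  pose k := `|b| + 1.
  have k0 : 0 < k by rewrite /k ltr_pwDr // normr_ge0.
  pose q := e / (2 * k).
  have q0 : 0 < q by rewrite /q divr_gt0 // mulr_gt0.
  have hq : q * (2 * k) = e by rewrite /q mulrVK // unitfE mulf_neq0 // gt_eqF.
  pose eta := Num.min d q.
  have eta0 : 0 < eta by rewrite lt_min d0 q0.
  have [m hm] := @pow2_big _ _ eta0.
  have hp : 0 < 2 ^+ m :> R by apply: exprn_gt0.
  have x2 : 0 <= x * 2 ^+ m by rewrite mulr_ge0 // ltW.
  pose n := Num.trunc (x * 2 ^+ m).
  have /andP [hn1 hn2] := truncn_itv x2; rewrite -/n in hn1 hn2.
  pose y : R := n%:R / 2 ^+ m.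
  have y0 : 0 <= y by rewrite divr_ge0 // ltW.
  have hyx : y <= x by rewrite /y ler_pdivrMr.
  have hxy : x - y < 1 / 2 ^+ m.
    rewrite ltrBlDl /y -mulrDl ltr_pdivlMr //.
    by rewrite natr1.
  have hD : x - y < eta by apply: lt_trans hm.
  have hDd : `|x - y| < d.
    by rewrite ger0_norm ?subr_ge0 //; apply: lt_le_trans hD _; rewrite ge_min lexx.
  have hDq : x - y < q by apply: lt_le_trans hD _; rewrite ge_min lexx orbT.
  have H1 := Hd y y0 hDd.
  have gy : phi y = b * y + c.
    by have := gdy m n; rewrite /g -/y => /eqP; rewrite subr_eq0 => /eqP.
  have -> : g x = (phi x - phi y) - b * (x - y) by rewrite /g gy; ring.
  apply: (le_lt_trans (ler_normB _ _)).
  have hD0 : 0 <= x - y by rewrite subr_ge0.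
  rewrite normrM (ger0_norm hD0).
  have hb : 0 <= `|b| := normr_ge0 b.
  move: H1 hDq hq hb hD0; rewrite /k; set A := `|_ - _|; set D := x - y.
  move=> H1 hDq hq hb hD0; nra.
have [//|h] := eqVneq (g x) 0.
by have := key `|g x|; rewrite normr_gt0 h ltxx => /(_ isT).
Qed.


Set Implicit Arguments.
Unset Strict Implicit.

Section Alg.
Local Open Scope complex_scope.
Local Open Scope sesquilinear_scope.
Variable R : realType.
Local Notation C := R[i].

Lemma conjC_real (x : R) : (x%:C)^*%R = x%:C :> C.
Proof. exact: conjc_real. Qed.

Lemma Re_real (x : R) : complex.Re (x%:C : C) = x.
Proof. by []. Qed.

Lemma Re_sum I (r : seq I) (P : pred I) (F : I -> C) :
  complex.Re (\sum_(i <- r | P i) F i) = \sum_(i <- r | P i) complex.Re (F i).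
Proof. elim/big_rec2: _ => //= i y1 y2 _ <-; by case: (F i); case: y2. Qed.

Lemma tr_udu k (U : 'M[C]_k) (d : 'rV[C]_k) : U \is unitarymx ->
  \tr (U *m diag_mx d *m U ^t*) = \sum_i d 0 i.
Proof.
move=> /unitarymxP hU.
by rewrite mxtrace_mulC mulmxA (mulmx1C hU) mul1mx mxtrace_diag.
Qed.

Lemma trphi_decomp k phi (X : 'M[C]_k) :
  (exists p : 'M[C]_k * 'rV[R]_k, spectral_decomp X p.1 p.2) ->
  exists U mu, spectral_decomp X U mu /\ trphi phi X = \sum_i phi (mu 0 i).
Proof.
move=> ex; rewrite /trphi /matfun; case: pselect => [e|//].
case: (cid e) => [[U mu] /= hp]; exists U, mu; split => //.
rewrite tr_udu; last by case: hp.
by rewrite Re_sum; apply: eq_bigr => i _; rewrite mxE.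
Qed.

Lemma decomp_tr k (X U : 'M[C]_k) mu : spectral_decomp X U mu ->
  \tr X = \sum_i (mu 0 i)%:C.
Proof.
case=> hU ->; rewrite tr_udu //; by apply: eq_bigr => i _; rewrite mxE.
Qed.

Lemma decomp_tr2 k (X U : 'M[C]_k) mu : spectral_decomp X U mu ->
  \tr (X *m X) = \sum_i ((mu 0 i) ^+ 2)%:C.
Proof.
case=> hU ->; set D := diag_mx _.
have hU' := mulmx1C (unitarymxP hU).
have -> : U *m D *m U ^t* *m (U *m D *m U ^t*) = U *m (D *m D) *m U^t*.
  by rewrite !mulmxA -[U *m D *m U ^t* *m U]mulmxA hU' mulmx1.
have -> : D *m D = diag_mx (map_mx (fun x => (x ^+ 2)%:C) mu).
  apply/matrixP => i j; rewrite /D mul_diag_mx !mxE.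
  case: (i == j) => /=; rewrite ?mulr1n ?mulr0n ?mulr0 //.
  by rewrite expr2 rmorphM.
rewrite tr_udu //; by apply: eq_bigr => i _; rewrite mxE.
Qed.


Lemma herm_decomp k (X : 'M[C]_k) : X \is hermsymmx ->
  exists p : 'M[C]_k * 'rV[R]_k, spectral_decomp X p.1 p.2.
Proof.
move=> hX.
have hr := hermitian_spectral_diag_real hX.
have /orthomx_spectralP hE := hermitian_normalmx hX.
exists ((spectralmx X)^t*, map_mx (fun z : C => complex.Re z) (spectral_diag X)) => /=.
split; first by rewrite trmxC_unitary spectral_unitarymx.
have e : diag_mx (map_mx (fun x : R => x%:C)
    (map_mx (fun z : C => complex.Re z) (spectral_diag X))) = diag_mx (spectral_diag X).
  congr diag_mx; apply/matrixP => i j; rewrite !mxE.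
  by rewrite RRe_real //; move/mxOverP: hr; apply.
rewrite trmxCK e; rewrite invmx_unitary in hE; first exact: hE.
exact: spectral_unitarymx.
Qed.


Lemma decomp_psd k (X U : 'M[C]_k) mu : spectral_decomp X U mu -> psdmx X ->
  forall i, 0 <= mu 0 i.
Proof.
case=> hU hX hpsd i.
pose a : 'rV[C]_k := delta_mx 0 i.
have := hpsd (a *m U^t*).
have hU' := mulmx1C (unitarymxP hU).
rewrite trmx_mul map_mxM trmxCK hX.
set D := diag_mx _.
have -> : a *m U ^t* *m (U *m D *m U ^t*) *m (U *m a^t*) = a *m D *m a^t*.
  rewrite !mulmxA -[a *m U^t* *m U]mulmxA hU' mulmx1.
  by rewrite -[a *m D *m U^t* *m U]mulmxA hU' mulmx1.
rewrite /D mul_mx_diag mxE (bigD1 i) //= big1 ?addr0.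
  by rewrite !mxE !eqxx /= mulr1n mul1r conjC1 mulr1 ler0c.
move=> j hj; by rewrite !mxE (negbTE hj) andbF mul0r mul0r.
Qed.


Definition sel N (A : {set 'I_N}) : 'M[C]_(#|A|, N) :=
  \matrix_(i, j) ((enum_val i == j)%:R).

Arguments sel {N} A.

Lemma principal_sel N (L : 'M[C]_N) A :
  principal_submx L A = sel A *m L *m (sel A)^t*.
Proof.
apply/matrixP => i j; rewrite !mxE (bigD1 (enum_val j)) //= big1 ?addr0.
  rewrite !mxE eqxx conjC1 mulr1 (bigD1 (enum_val i)) //= big1 ?addr0.
    by rewrite !mxE eqxx mul1r.
  by move=> l hl; rewrite !mxE eq_sym (negbTE hl) mul0r.
move=> l hl; rewrite !mxE eq_sym (negbTE hl) conjC0 mulr0 //.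
Qed.

Lemma psd_principal N (L : 'M[C]_N) A : psdmx L -> psdmx (principal_submx L A).
Proof.
move=> hL v; rewrite principal_sel.
have := hL (v *m sel A); rewrite trmx_mul map_mxM !mulmxA //.
Qed.

Lemma herm_principal N (L : 'M[C]_N) A : L \is hermsymmx ->
  principal_submx L A \is hermsymmx.
Proof.
move=> /is_hermitianmxP; rewrite expr0 scale1r => hL.
apply/is_hermitianmxP; rewrite expr0 scale1r principal_sel.
rewrite !trmx_mul !map_mxM trmxCK -hL mulmxA //.
Qed.

Lemma tr_principal N (L : 'M[C]_N) A :
  \tr (principal_submx L A) = \sum_(x in A) L x x.
Proof. by rewrite big_enum_val; apply: eq_bigr => i _; rewrite mxE. Qed.

Lemma tr2_principal N (L : 'M[C]_N) A :
  \tr (principal_submx L A *m principal_submx L A) =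
  \sum_(x in A) \sum_(y in A) L x y * L y x.
Proof.
rewrite [RHS]big_enum_val; apply: eq_bigr => i _; rewrite mxE [RHS]big_enum_val.
by apply: eq_bigr => j _; rewrite !mxE.
Qed.


Lemma trphi0 k phi (X : 'M[C]_k) : k = 0%N -> trphi phi X = 0.
Proof. move=> hk; subst k; by rewrite /trphi /mxtrace big_ord0. Qed.

Lemma trphi1 k phi (X : 'M[C]_k) : k = 1%N -> X \is hermsymmx ->
  trphi phi X = phi (complex.Re (\tr X)).
Proof.
move=> hk; subst k => hX.
have [U [mu [hd ->]]] := trphi_decomp phi (herm_decomp hX).
by rewrite (decomp_tr hd) !big_ord1.
Qed.

Lemma trphi2 k phi (X : 'M[C]_k) (a b : R) : k = 2%N -> X \is hermsymmx ->
  \tr X = (a + b)%:C -> \tr (X *m X) = (a ^+ 2 + b ^+ 2)%:C ->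
  trphi phi X = phi a + phi b.
Proof.
move=> hk; subst k => hX h1 h2.
have [U [mu [hd ->]]] := trphi_decomp phi (herm_decomp hX).
move: h1 h2; rewrite (decomp_tr hd) (decomp_tr2 hd) !big_ord_recr !big_ord0 /= !add0r.
rewrite -!rmorphD => /complexI h1 /complexI h2.
set m0 := mu 0 _ in h1 h2 *; set m1 := mu 0 _ in h1 h2 *.
have : (m0 - a) * (m0 - b) = 0.
  have e1 : m1 = a + b - m0 by rewrite -h1; ring.
  have E : 2 * ((m0 - a) * (m0 - b)) = m0 ^+ 2 + m1 ^+ 2 - (a ^+ 2 + b ^+ 2).
    by rewrite e1; ring.
  move: E; rewrite h2 subrr => /eqP; rewrite mulf_eq0 pnatr_eq0 /= => /eqP //.
move/eqP; rewrite mulf_eq0 !subr_eq0 => /orP [] /eqP e0.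
  have -> : m1 = b by move: h1; rewrite e0 => /addrI.
  by rewrite e0.
have -> : m1 = a by move: h1; rewrite e0 [a + b]addrC => /addrI.
by rewrite e0 addrC.
Qed.


Lemma modular_sum N (F : 'I_N -> R) : modular (fun A : {set 'I_N} => \sum_(x in A) F x).
Proof.
move=> S T.
rewrite (@big_setID _ _ _ _ (S :|: T) T) (@big_setID _ _ _ _ S T).
have e1 : (S :|: T) :&: T = T.
  by apply/setP => x; rewrite !inE; case: (x \in S); case: (x \in T).
have e2 : (S :|: T) :\: T = S :\: T.
  by apply/setP => x; rewrite !inE; case: (x \in S); case: (x \in T).
rewrite e1 e2 /=; ring.
Qed.

Lemma Z_gt0 N phi (L : 'M[C]_N) : 0 < dkpp_Z phi L.
Proof.
rewrite /dkpp_Z (bigD1 finset.set0) //=.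
apply: (lt_le_trans (expR_gt0 (trphi phi (principal_submx L finset.set0)))).
by rewrite lerDl sumr_ge0 // => i _; rewrite ltW // expR_gt0.
Qed.

Lemma ln_dkpp N phi (L : 'M[C]_N) A :
  ln (dkpp phi L A) = trphi phi (principal_submx L A) - ln (dkpp_Z phi L).
Proof.
by rewrite /dkpp ln_div ?posrE ?expR_gt0 ?Z_gt0 // expRK.
Qed.

Lemma logmod_of N phi (L : 'M[C]_N) :
  modular (fun A => trphi phi (principal_submx L A)) -> log_modular (dkpp phi L).
Proof.
move=> hm; split.
  by move=> A; rewrite /dkpp divr_gt0 ?expR_gt0 ?Z_gt0.
move=> S T /=; rewrite !ln_dkpp; have := hm S T => /= h; lra.
Qed.

Lemma modular_of N phi (L : 'M[C]_N) :
  log_modular (dkpp phi L) -> modular (fun A => trphi phi (principal_submx L A)).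
Proof.
case=> _ hm S T /=; have := hm S T; rewrite /= !ln_dkpp => h; lra.
Qed.


Lemma trphi_affine N phi (L : 'M[C]_N) A (b c : R) :
  (forall x, 0 <= x -> phi x = b * x + c) -> L \is hermsymmx -> psdmx L ->
  trphi phi (principal_submx L A) = \sum_(x in A) (b * complex.Re (L x x) + c).
Proof.
move=> hphi hL hpsd.
have hX := herm_principal A hL; have hP := psd_principal (A:=A) hpsd.
have [U [mu [hd ->]]] := trphi_decomp phi (herm_decomp hX).
have h0 := decomp_psd hd hP.
rewrite (eq_bigr (fun i => b * mu 0 i + c)); last by move=> i _; rewrite hphi.
rewrite [RHS]big_enum_val !big_split /= -!mulr_sumr.
congr (b * _ + _).
have e : \sum_(i < #|A|) L (enum_val i) (enum_val i) = \tr (principal_submx L A).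
  by rewrite tr_principal [RHS]big_enum_val.
rewrite -Re_sum e (decomp_tr hd) Re_sum.
by apply: eq_bigr => i _.
Qed.

Lemma psd_MMt k m (M : 'M[C]_(k, m)) : psdmx (M *m M^t*).
Proof.
move=> v.
have -> : v *m (M *m M^t*) *m v^t* = (v *m M) *m (v *m M)^t*.
  by rewrite trmx_mul map_mxM !mulmxA.
rewrite mxE sumr_ge0 // => i _; rewrite !mxE mul_conjC_ge0 //.
Qed.

Lemma psd_scale k (M : 'M[C]_k) r : 0 <= r -> psdmx M -> psdmx (r%:C *: M).
Proof.
move=> hr hM v; rewrite -scalemxAr -scalemxAl mxE mulr_ge0 // ler0c //.
Qed.

Lemma psd_add k (M M' : 'M[C]_k) : psdmx M -> psdmx M' -> psdmx (M + M').
Proof. by move=> h h' v; rewrite mulmxDr mulmxDl mxE addr_ge0. Qed.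

Lemma herm_of k (M : 'M[C]_k) : (forall i j, M j i = (M i j)^*%R) ->
  M \is hermsymmx.
Proof.
move=> h; apply/is_hermitianmxP; rewrite expr0 scale1r.
by apply/matrixP => i j; rewrite !mxE h.
Qed.

Definition ind N (i0 i1 : 'I_N) (i : 'I_N) : R := ((i == i0) || (i == i1))%:R.

Definition Lmat N (i0 i1 : 'I_N) (t s : R) : 'M[C]_N :=
  (t - s)%:C *: (1%:M *m (1%:M)^t*) +
  s%:C *: ((\col_i (ind i0 i1 i)%:C) *m (\col_i (ind i0 i1 i)%:C)^t*).

Lemma Lent N (i0 i1 : 'I_N) t s i j :
  Lmat i0 i1 t s i j = ((t - s) * (i == j)%:R + s * (ind i0 i1 i * ind i0 i1 j))%:C.
Proof.
rewrite /Lmat trmx1 map_mx1 mul1mx !mxE big_ord1 !mxE conjC_real.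
by symmetry; rewrite rmorphD /= !rmorphM /= rmorph_nat.
Qed.

Lemma Lherm N (i0 i1 : 'I_N) t s : Lmat i0 i1 t s \is hermsymmx.
Proof.
apply: herm_of => i j; rewrite !Lent conjC_real eq_sym.
by rewrite [ind i0 i1 i * _]mulrC.
Qed.

Lemma Lpsd N (i0 i1 : 'I_N) t s : 0 <= s -> s <= t -> psdmx (Lmat i0 i1 t s).
Proof.
move=> hs hst; apply: psd_add.
  by apply: psd_scale; [rewrite subr_ge0 | exact: psd_MMt].
by apply: psd_scale; [exact: hs | exact: psd_MMt].
Qed.

End Alg.


Local Open Scope complex_scope.

Lemma CD (R : realType) (x y : R) : x%:C + y%:C = (x + y)%:C :> R[i].
Proof. by rewrite rmorphD. Qed.
Lemma CM (R : realType) (x y : R) : x%:C * y%:C = (x * y)%:C :> R[i].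
Proof. by rewrite rmorphM. Qed.

Theorem mainTheorem4 (R : realType) (N : nat) (hN : (2 <= N)%N) (phi : R -> R)
  (hphi : {within [set x : R | 0 <= x], continuous phi}) :
  (forall L : 'M[R[i]]_N, L \is hermsymmx -> psdmx L -> log_modular (dkpp phi L))
  <-> exists b c : R, forall x : R, 0 <= x -> phi x = b * x + c.
Proof.
split; last first.
  case=> b [c hbc] L hLh hLp; apply: logmod_of => S T /=.
  rewrite !(@trphi_affine _ _ phi L _ b c hbc hLh hLp).
  exact: (modular_sum (fun x => b * complex.Re (L x x) + c) S T).
move=> H; apply: jensen_affine hphi _ => t s hs hst.
pose i0 : 'I_N := Ordinal (ltnW hN).
pose i1 : 'I_N := Ordinal hN.
have hne : i0 != i1 by [].
pose L := Lmat i0 i1 t s.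
have hLh : L \is hermsymmx := Lherm i0 i1 t s.
have hm := modular_of (H L hLh (Lpsd i0 i1 hs hst)) [set i0]%SET [set i1]%SET.
move: hm => /=.
have ene : (i0 == i1) = false by apply/negbTE.
have ene' : (i1 == i0) = false by rewrite eq_sym ene.
have L00 : L i0 i0 = t%:C.
  by rewrite /L Lent /ind !eqxx /= ?ene; congr (_%:C); ring.
have L11 : L i1 i1 = t%:C.
  by rewrite /L Lent /ind !eqxx /= ?ene' ?orbT; congr (_%:C); ring.
have L01 : L i0 i1 = s%:C.
  by rewrite /L Lent /ind !eqxx /= ?ene ?ene' ?orbT; congr (_%:C); ring.
have L10 : L i1 i0 = s%:C.
  by rewrite /L Lent /ind !eqxx /= ?ene ?ene' ?orbT; congr (_%:C); ring.
have e0 : ([set i0] :&: [set i1])%SET = finset.set0.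
  apply/setP => x; rewrite !inE; apply/negbTE/negP => /andP [/eqP -> ].
  by rewrite ene.
rewrite e0.
rewrite [trphi phi (principal_submx L finset.set0)]trphi0; last exact: cards0.
rewrite [trphi phi (principal_submx L [set i0]%SET)]trphi1; first last.
- exact: herm_principal.
- exact: cards1.
rewrite [trphi phi (principal_submx L [set i1]%SET)]trphi1; first last.
- exact: herm_principal.
- exact: cards1.
rewrite !tr_principal !big_set1 L00 L11 /=.
rewrite [trphi phi (principal_submx L _)](@trphi2 _ _ phi _ (t + s) (t - s)); first last.
- rewrite tr2_principal big_setU1 ?inE ?ene //= big_set1 !big_setU1 ?inE ?ene //=.
  rewrite !big_set1 L00 L11 L01 L10 !CM !CD; congr (_%:C); ring.
- rewrite tr_principal big_setU1 ?inE ?ene //= big_set1 L00 L11 CD.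
  congr (_%:C); ring.
- exact: herm_principal.
- by rewrite cards2 hne.
move=> h; lra.
Qed.
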